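(* Let $\zeta_1,\ldots,\zeta_n$ be independent Bernoulli random variables with $p_i=1-q_i=\mathbb{P}(\zeta_i=1)$, and $V_2=\sum_{i=1}^n\zeta_i$. Let $r>1$, $p\in(0,1)$, $q=1-p$ with $rq=p\sum_{i=1}^np_i$. Then $$\sup_{z\ge0}|\mathbb{E}[\mathscr{A}g_z(V_2)]|\le\left(2p^{-(r+1)}-p^{-1}\right)\sum_{i=1}^np_i(1-pq_i).$$
   Context: $x^+=\max\{x,0\}$. $\mathrm{N}_{r,p}$ is negative binomial with $\mathbb{P}(\mathrm{N}_{r,p}=k)=\binom{r+k-1}{k}p^rq^k$, $k\in\mathbb{Z}_+$. The Stein operator is $\mathscr{A}g(k)=q(r+k)g(k+1)-kg(k)$. For $z\ge0$, $g_z(0)=0$ and for $k\ge1$, $g_z(k)=-\sum_{j\ge k}\frac{r(r+1)\cdots(r+j-1)}{r(r+1)\cdots(r+k-1)}\frac{(k-1)!}{j!}q^{j-k}\big[(j-z)^+-\mathbb{E}[(\mathrm{N}_{r,p}-z)^+]\big]$, so that $\mathbb{E}[\mathscr{A}g_z(V)]=\mathbb{E}[(V-z)^+]-\mathbb{E}[(\mathrm{N}_{r,p}-z)^+]$. *)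

(* Defs.v *)
From mathcomp Require Import all_boot all_order all_algebra.
From mathcomp Require Import all_classical all_reals all_analysis.
Set Implicit Arguments. Unset Strict Implicit. Unset Printing Implicit Defensive.
Import Order.TTheory GRing.Theory Num.Theory numFieldNormedType.Exports.
Local Open Scope ring_scope.

Section Defs.
Variable R : realType.

Definition rseries (u : nat -> R) : R := limn (series u).

Definition posp (x : R) : R := Num.max x 0.

Definition rising (r : R) (k : nat) : R := \prod_(i < k) (r + i%:R).

(* P(N_{r,p} = k) = binom(r+k-1,k) p^r q^k, q = 1 - p *)
Definition nb_pmf (r p : R) (k : nat) : R :=
  rising r k / (k`!)%:R * powR p r * (1 - p) ^+ k.

Definition nb_posp_mean (r p z : R) : R :=
  rseries (fun k => nb_pmf r p k * posp (k%:R - z)).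

Definition gz (r p z : R) (k : nat) : R :=
  if k is 0 then 0 else
  - rseries (fun m =>
      rising r (k + m) / rising r k * (((k.-1)`!)%:R / ((k + m)`!)%:R)
      * (1 - p) ^+ m * (posp ((k + m)%:R - z) - nb_posp_mean r p z)).

Definition stein (r p : R) (g : nat -> R) (k : nat) : R :=
  (1 - p) * (r + k%:R) * g k.+1 - k%:R * g k.

(* E[f(V)] where V = zeta_1 + ... + zeta_n, zeta_i independent Bernoulli(pv i),
   computed on the canonical product space {0,1}^n *)
Definition bern_sum_expect (n : nat) (pv : 'I_n -> R) (f : nat -> R) : R :=
  \sum_(x : {ffun 'I_n -> bool})
     (\prod_(i < n) (if x i then pv i else 1 - pv i)) * f (\sum_(i < n) nat_of_bool (x i))%N.

End Defs.

(* Main.v *)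
Require Import Defs.
From mathcomp Require Import all_boot all_order all_algebra.
From mathcomp Require Import all_classical all_reals all_analysis.
From mathcomp Require Import ring lra.
Import Order.TTheory GRing.Theory Num.Theory numFieldNormedType.Exports.
Local Open Scope classical_set_scope.
Local Open Scope ring_scope.

Section Fin.
Variable R : realType.
Variable n : nat.
Variable pv : 'I_n -> R.
Local Notation X := {ffun 'I_n -> bool}.

Definition wt (x : X) : R := \prod_(i < n) (if x i then pv i else 1 - pv i).
Definition EE (F : X -> R) : R := \sum_(x : X) wt x * F x.
Definition VV (x : X) : nat := (\sum_(i < n) nat_of_bool (x i))%N.
Definition Vi (i : 'I_n) (x : X) : nat := (\sum_(j < n | j != i) nat_of_bool (x j))%N.
Definition fl (i : 'I_n) (x : X) : X := [ffun j => if j == i then ~~ x j else x j].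
Definition Wi (i : 'I_n) (x : X) : R :=
  \prod_(j < n | j != i) (if x j then pv j else 1 - pv j).

Lemma bern_EE f : bern_sum_expect pv f = EE (fun x => f (VV x)).
Proof. by []. Qed.

Lemma EE_lin (a b : R) F G : EE (fun x => a * F x + b * G x) = a * EE F + b * EE G.
Proof.
rewrite /EE mulr_sumr mulr_sumr -big_split /=; apply: eq_bigr => x _.
by rewrite mulrDr !mulrA [wt x * a]mulrC [wt x * b]mulrC.
Qed.

Lemma EE_ext F G : (forall x, F x = G x) -> EE F = EE G.
Proof. by move=> h; apply: eq_bigr => x _; rewrite h. Qed.

Lemma fl_invol i : involutive (fl i).
Proof.
move=> x; apply/ffunP => j; rewrite !ffunE.
by case: eqP => _ //; rewrite negbK.
Qed.

Lemma fl_i i x : fl i x i = ~~ x i.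
Proof. by rewrite ffunE eqxx. Qed.

Lemma fl_j i x j : j != i -> fl i x j = x j.
Proof. by rewrite ffunE => /negbTE ->. Qed.

Lemma wtE i x : wt x = (if x i then pv i else 1 - pv i) * Wi i x.
Proof. by rewrite /wt (bigD1 i). Qed.

Lemma Wi_fl i x : Wi i (fl i x) = Wi i x.
Proof. by apply: eq_bigr => j ji; rewrite fl_j. Qed.

Lemma Vi_fl i x : Vi i (fl i x) = Vi i x.
Proof. by apply: eq_bigr => j ji; rewrite fl_j. Qed.

Lemma VVE i x : VV x = (nat_of_bool (x i) + Vi i x)%N.
Proof. by rewrite /VV (bigD1 i). Qed.

Lemma EE_split i F : EE F = \sum_(x : X) (x i)%:R * (Wi i x * (pv i * F x + (1 - pv i) * F (fl i x))).
Proof.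
have -> : EE F = \sum_(x : X) ((x i)%:R * (wt x * F x) + (~~ x i)%:R * (wt x * F x)).
  by apply: eq_bigr => x _; case: (x i); rewrite /= ?mul1r ?mul0r ?add0r ?addr0.
rewrite big_split /= [X in _ + X](reindex_inj (inv_inj (fl_invol i))) /= -big_split /=.
apply: eq_bigr => x _; rewrite fl_i negbK !(wtE i) Wi_fl fl_i.
by case: (x i); rewrite /= ?mul0r ?addr0 ?mul1r ?add0r // mulrDr !mulrA
  [pv i * _]mulrC [(1 - pv i) * _]mulrC.
Qed.

Lemma EE_indep i h : (forall x, h (fl i x) = h x) ->
  EE (fun x => (x i)%:R * h x) = pv i * EE h.
Proof.
move=> hfl; rewrite !(EE_split i) mulr_sumr; apply: eq_bigr => x _.
rewrite !hfl fl_i; case: (x i) => /=; last by rewrite !mul0r mulr0.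
by rewrite !mul1r !mul0r mulr0 addr0 -mulrDl addrC subrK mul1r mulrCA.
Qed.

Lemma EE_D F G : EE (fun x => F x + G x) = EE F + EE G.
Proof. by rewrite /EE -big_split; apply: eq_bigr => x _; rewrite mulrDr. Qed.
Lemma EE_B F G : EE (fun x => F x - G x) = EE F - EE G.
Proof. by rewrite /EE -sumrB; apply: eq_bigr => x _; rewrite mulrBr. Qed.
Lemma EE_Z a F : EE (fun x => a * F x) = a * EE F.
Proof. by rewrite /EE mulr_sumr; apply: eq_bigr => x _; rewrite mulrCA. Qed.

Lemma EE_V G : EE (fun x => (VV x)%:R * G x) = \sum_(i < n) EE (fun x => (x i)%:R * G x).
Proof.
rewrite /EE exchange_big /=; apply: eq_bigr => x _.
by rewrite /VV natr_sum mulr_suml mulr_sumr; apply: eq_bigr => i _; rewrite mulrCA.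
Qed.

Lemma EE_xg1 i (g : nat -> R) :
  EE (fun x => (x i)%:R * g (VV x).+1) = pv i * EE (fun x => g (Vi i x).+2).
Proof.
rewrite -EE_indep; last by move=> x; rewrite Vi_fl.
by apply: EE_ext => x; rewrite (VVE i); case: (x i); rewrite /= ?mul0r.
Qed.

Lemma EE_xg0 i (g : nat -> R) :
  EE (fun x => (x i)%:R * g (VV x)) = pv i * EE (fun x => g (Vi i x).+1).
Proof.
rewrite -EE_indep; last by move=> x; rewrite Vi_fl.
by apply: EE_ext => x; rewrite (VVE i); case: (x i); rewrite /= ?mul0r.
Qed.

Lemma EE_g1 i (g : nat -> R) :
  EE (fun x => g (VV x).+1) =
  pv i * EE (fun x => g (Vi i x).+2) + (1 - pv i) * EE (fun x => g (Vi i x).+1).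
Proof.
have -> : EE (fun x => g (VV x).+1) = EE (fun x => ((x i)%:R * g (Vi i x).+2
   + g (Vi i x).+1) - (x i)%:R * g (Vi i x).+1).
  by apply: EE_ext => x; rewrite (VVE i); case: (x i); rewrite /= ?mul0r ?mul1r
    ?add0r ?subr0 // addrK.
rewrite EE_B EE_D !EE_indep; try by move=> x; rewrite Vi_fl.
by rewrite mulrBl mul1r addrA.
Qed.

Lemma EE_stein (g : nat -> R) (r p : R) : r * (1 - p) = p * \sum_(i < n) pv i ->
  EE (fun x => stein r p g (VV x)) =
  \sum_(i < n) pv i * (1 - p * (1 - pv i)) *
     EE (fun x => g (Vi i x).+2 - g (Vi i x).+1).
Proof.
move=> hr.
have -> : EE (fun x => stein r p g (VV x)) =
  ((1 - p) * r) * EE (fun x => g (VV x).+1) + (1 - p) * EE (fun x => (VV x)%:R * g (VV x).+1)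
  - EE (fun x => (VV x)%:R * g (VV x)).
  rewrite -!EE_Z -EE_D -EE_B; apply: EE_ext => x.
  by rewrite /stein; ring.
rewrite !EE_V [(1 - p) * r]mulrC hr -mulrA mulr_suml mulr_sumr [(1 - p) * _]mulr_sumr -big_split -sumrB /=.
apply: eq_bigr => i _.
rewrite EE_xg1 EE_xg0 (EE_g1 i) EE_B.
ring.
Qed.

Lemma EE_mass : EE (fun _ => 1) = 1.
Proof.
rewrite /EE /wt; under eq_bigr do rewrite mulr1.
rewrite -(@bigA_distr_bigA R 0 1 *%R +%R _ _ (fun i (b : bool) => if b then pv i else 1 - pv i)) /=.
by rewrite big1 // => i _; rewrite big_bool /= addrC subrK.
Qed.

Lemma wt_ge0 x : (forall i, 0 <= pv i <= 1) -> 0 <= wt x.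
Proof.
move=> h; rewrite /wt prodr_ge0 // => i _; case: (x i); have /andP[] := h i => //.
by move=> _ ?; rewrite subr_ge0.
Qed.

End Fin.

Section Ratio.
Variable R : realType.

Lemma ratio_bound (u : nat -> R) (rho : R) N : 0 < rho -> (forall j, 0 <= u j) ->
  (forall j, (N <= j)%N -> u j.+1 <= rho * u j) ->
  forall j, u j <= (\sum_(i < N.+1) u i / rho ^+ i) * rho ^+ j.
Proof.
move=> rho0 u0 hu; elim=> [|j IH].
  rewrite expr0 mulr1 big_ord_recl /= expr0 divr1 lerDl.
  by apply: sumr_ge0 => i _; rewrite divr_ge0 // exprn_ge0 // ltW.
case: (leqP N j) => hj.
  apply: (le_trans (hu j hj)); rewrite exprS mulrCA ler_pM2l //.
have hjN : (j.+1 < N.+1)%N by [].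
rewrite (bigD1 (Ordinal hjN)) //= mulrDl.
rewrite -[X in X <= _]addr0 lerD //.
  by rewrite divfK // expf_neq0 // gt_eqF.
apply: mulr_ge0; last by rewrite exprn_ge0 // ltW.
by apply: sumr_ge0 => i _; rewrite divr_ge0 // exprn_ge0 // ltW.
Qed.

Lemma ratio_cvg (u : nat -> R) (rho : R) N : 0 < rho -> rho < 1 -> (forall j, 0 <= u j) ->
  (forall j, (N <= j)%N -> u j.+1 <= rho * u j) -> cvgn (series u).
Proof.
move=> rho0 rho1 u0 hu.
set C := \sum_(i < N.+1) u i / rho ^+ i.
have C0 : 0 <= C by apply: sumr_ge0 => i _; rewrite divr_ge0 // exprn_ge0 // ltW.
apply: (@series_le_cvg _ _ (geometric C rho)) => //.
- by move=> j /=; rewrite mulr_ge0 // exprn_ge0 // ltW.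
- by move=> j /=; apply: ratio_bound.
- by apply: is_cvg_geometric_series; rewrite ger0_norm // ltW.
Qed.

End Ratio.

Section NB.
Variable R : realType.
Variables r p : R.
Hypothesis r1 : 1 < r.
Hypothesis p0 : 0 < p.
Hypothesis p1 : p < 1.

Local Notation q := (1 - p).
Definition aa (j : nat) : R := rising r j / (j`!)%:R.
Local Notation pi := (nb_pmf r p).

Lemma q0 : 0 < q. Proof. by rewrite subr_gt0. Qed.
Lemma q1 : q < 1. Proof. by rewrite ltrBlDr ltrDl. Qed.
Lemma r0 : 0 < r. Proof. by apply: lt_trans r1. Qed.

Lemma rising_S j : rising r j.+1 = rising r j * (r + j%:R).
Proof. by rewrite /rising big_ord_recr. Qed.

Lemma rising_gt0 j : 0 < rising r j.
Proof.
rewrite /rising; apply: prodr_gt0 => i _.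
by apply: ltr_wpDr => //; exact: r0.
Qed.

Lemma aa_gt0 j : 0 < aa j.
Proof. by rewrite /aa divr_gt0 ?rising_gt0 // ltr0n fact_gt0. Qed.

Lemma aa0 : aa 0 = 1.
Proof. by rewrite /aa /rising big_ord0 fact0 divr1. Qed.

Lemma aa_rec j : (j.+1)%:R * aa j.+1 = (r + j%:R) * aa j.
Proof.
rewrite /aa rising_S factS natrM invfM.
have h : (j.+1)%:R != 0 :> R by rewrite pnatr_eq0.
field; rewrite pnatr_eq0 -lt0n fact_gt0 /=; rewrite -natr1 addrC in h; exact: h.
Qed.

Lemma piE j : pi j = aa j * powR p r * q ^+ j.
Proof. by []. Qed.

Lemma pi_gt0 j : 0 < pi j.
Proof. rewrite piE; apply: mulr_gt0; [apply: mulr_gt0; [exact: aa_gt0|exact: powR_gt0]|exact: exprn_gt0 q0]. Qed.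

Lemma pi_ge0 j : 0 <= pi j.
Proof. exact/ltW/pi_gt0. Qed.

Lemma pi_rec j : (j.+1)%:R * pi j.+1 = q * (r + j%:R) * pi j.
Proof.
rewrite !piE exprS.
have := aa_rec j; move=> h.
transitivity ((j.+1%:R * aa j.+1) * powR p r * q * q ^+ j); first by ring.
rewrite h; ring.
Qed.

Definition rho : R := 1 - p / 2.

Lemma rho0 : 0 < rho.
Proof. have := p1; have := p0; rewrite /rho; lra. Qed.
Lemma rho1 : rho < 1.
Proof. have := p1; have := p0; rewrite /rho; lra. Qed.

Definition NN : nat := (Num.Def.archi_bound (2 * q * r / p)).+1.

Lemma NN_prop j : (NN <= j)%N -> q * (r + j%:R) <= rho * j%:R.
Proof.
move=> hj.
have h1 : 2 * q * r / p < (Num.Def.archi_bound (2 * q * r / p))%:R.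
  apply: archi_boundP; rewrite divr_ge0 ?mulr_ge0 ?ltW ?q0 ?r0 //.
have h2 : (Num.Def.archi_bound (2 * q * r / p))%:R <= j%:R :> R.
  by rewrite ler_nat; apply: ltnW.
have h3 : 2 * q * r < p * j%:R.
  by rewrite -ltr_pdivrMl // mulrC; apply: lt_le_trans h2.
have := p1; have := p0; rewrite /rho; lra.
Qed.

Lemma NN_ge1 : (1 <= NN)%N. Proof. by []. Qed.

Lemma cvg_pi : cvgn (series pi).
Proof.
apply: (@ratio_cvg _ _ rho NN rho0 rho1 pi_ge0) => j hj.
have := pi_rec j; have := NN_prop j hj; have := pi_ge0 j; have := pi_ge0 j.+1.
move=> a b c d.
have hj1 : 0 < (j.+1)%:R :> R by rewrite ltr0n.
rewrite -(ler_pM2l hj1) d.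
apply: (le_trans (ler_wpM2r b c)).
have -> : rho * j%:R * pi j = j%:R * (rho * pi j) by ring.
apply: ler_wpM2r; first by rewrite mulr_ge0 // ltW // rho0.
by rewrite ler_nat.
Qed.

Lemma cvg_jpi : cvgn (series (fun j => j%:R * pi j)).
Proof.
apply: (@ratio_cvg _ _ rho NN rho0 rho1) => [j|j hj].
  by rewrite mulr_ge0 ?pi_ge0.
rewrite pi_rec mulrA.
apply: ler_wpM2r; first exact: pi_ge0.
exact: NN_prop j hj.
Qed.


Definition ss N : R -> R := \sum_(j < N) (fun x => aa j * x ^+ j).
Definition ds N (x : R) : R := \sum_(j < N) aa j * (j%:R * x ^+ j.-1).

Lemma ssE N x : ss N x = \sum_(j < N) aa j * x ^+ j.
Proof. by rewrite /ss fct_sumE. Qed.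

Lemma der_ss N (x : R) : is_derive x (1:R) (ss N) (ds N x).
Proof.
apply: is_derive_sum => j.
have H := is_deriveZ (aa j) (is_deriveX j (@is_derive_id _ _ x (1:R))).
move: H; rewrite /GRing.scale /= mulr1.
have -> : (fun x0 : R => aa j * x0 ^+ j) = aa j \*: (id ^+ j)
  by apply/funext => y; rewrite /= exprfctE.
by [].
Qed.

Lemma ss_ident N (x : R) : (1 - x) * ds N x - r * ss N x = - (N%:R * aa N * x ^+ N.-1).
Proof.
elim: N => [|N IH]; first by rewrite ssE /ds !big_ord0 !mul0r !mulr0 subrr oppr0.
rewrite ssE /ds !big_ord_recr /= -ssE -/(ds N x).
have e1 : N%:R * x ^+ N.-1 * x = N%:R * x ^+ N.
  by case: N {IH} => [|N] /=; rewrite ?mul0r // -mulrA -exprSr.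
have e2 := aa_rec N.
transitivity ((1 - x) * ds N x - r * ss N x + aa N * (N%:R * x ^+ N.-1)
   - (aa N * (N%:R * x ^+ N.-1 * x) + r * (aa N * x ^+ N))); first by ring.
rewrite IH e1.
transitivity (- ((N%:R + r) * aa N * x ^+ N)); first by ring.
by rewrite addrC -e2.
Qed.

Definition PP (x : R) : R := powR (1 - x) r.
Definition P1 (x : R) : R := powR (1 - x) (r - 1).

Lemma der_PP (x : R) : x < 1 -> is_derive x (1:R) PP (r * P1 x * (-1)).
Proof.
move=> x1.
have hg : is_derive x (1:R) (fun y : R => 1 - y) (0 - 1).
  have := is_deriveB (@is_derive_cst _ _ _ (1:R) x (1:R)) (@is_derive_id _ _ x (1:R)).
  by have -> : (cst (1:R) - id) = (fun y : R => 1 - y) by apply/funext.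
have hf : is_derive (1 - x) (1:R) (fun y : R => powR y r) (r * (1 - x) `^ (r - 1)).
  by apply: is_derive1_powR; rewrite subr_gt0.
have := @is_derive1_comp R (fun y : R => powR y r) (fun y : R => 1 - y) x _ _ hf hg.
by rewrite sub0r.
Qed.

Definition psi N : R -> R := fun x => PP x * ss N x.
Definition chi N : R -> R := fun x => psi N x + aa N * x ^+ N.

Lemma PPE (x : R) : x < 1 -> PP x = (1 - x) * P1 x.
Proof. by move=> x1; rewrite /PP /P1 mulr_powRB1 // ?subr_ge0 ?ltW // r0. Qed.

Lemma der_psi N (x : R) : x < 1 ->
  is_derive x (1:R) (psi N) (- (P1 x * (N%:R * aa N * x ^+ N.-1))).
Proof.
move=> x1.
have H := is_deriveM (der_PP x x1) (der_ss N x).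
have -> : psi N = PP * ss N by apply/funext.
suff <- : (PP x *: ds N x + ss N x *: (r * P1 x * -1)) =
   (- (P1 x * (N%:R * aa N * x ^+ N.-1))) by [].
rewrite /GRing.scale /= (PPE x x1).
transitivity (P1 x * ((1 - x) * ds N x - r * ss N x)); first by ring.
rewrite ss_ident; ring.
Qed.

Lemma der_chi N (x : R) : x < 1 ->
  is_derive x (1:R) (chi N) ((1 - P1 x) * (N%:R * aa N * x ^+ N.-1)).
Proof.
move=> x1.
have H1 := der_psi N x x1.
have H2 := is_deriveZ (aa N) (is_deriveX N (@is_derive_id _ _ x (1:R))).
have H := is_deriveD H1 H2.
have -> : chi N = psi N + aa N \*: (id ^+ N).
  by apply/funext => y; rewrite /chi /= exprfctE.
suff <- : (- (P1 x * (N%:R * aa N * x ^+ N.-1)) + aa N *: ((N%:R * id x ^+ N.-1) *: (1:R)))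
   = ((1 - P1 x) * (N%:R * aa N * x ^+ N.-1)) by [].
rewrite /GRing.scale /=; ring.
Qed.

Lemma der1_val (f : R -> R) x df : is_derive x (1:R) f df -> (f^`())%classic x = df.
Proof. by move=> H; rewrite derive1E; exact: (derive_val (is_derive := H)). Qed.

Lemma der_ex (f : R -> R) (x : R) df : is_derive x (1:R) f df -> derivable f x 1.
Proof. by move=> H; exact: (@ex_derive _ _ _ _ _ _ _ H). Qed.

Lemma ss0 N : ss N 0 = (0 < N)%N%:R.
Proof.
rewrite ssE; case: N => [|N]; first by rewrite big_ord0.
by rewrite big_ord_recl /= expr0 mulr1 aa0 big1 ?addr0 // => i _; rewrite expr0n mulr0.
Qed.

Lemma PP0 : PP 0 = 1.
Proof. by rewrite /PP subr0 powR1. Qed.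

Lemma psi_q N : psi N q <= 1.
Proof.
have hq : q < 1 := q1.
have le : psi N q <= psi N 0.
  apply: (@ler0_derive1_le_cc _ (psi N) 0 q).
  - move=> x; rewrite in_itv /= => /andP[_ xq].
    exact: der_ex _ _ _ (der_psi N x (lt_trans xq hq)).
  - move=> x; rewrite in_itv /= => /andP[x0 xq].
    rewrite (der1_val _ _ _ (der_psi N x (lt_trans xq hq))) oppr_le0.
    apply: mulr_ge0; first exact: powR_ge0.
    apply: mulr_ge0; last by apply: exprn_ge0; exact: ltW.
    by apply: mulr_ge0 => //; exact/ltW/aa_gt0.
  - apply: derivable_within_continuous => x; rewrite in_itv /= => /andP[_ xq].
    exact: der_ex _ _ _ (der_psi N x (le_lt_trans xq hq)).
  - by rewrite in_itv /= lexx ltW // q0.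
  - by rewrite in_itv /= lexx ltW // q0.
  - exact/ltW/q0.
apply: (le_trans le); rewrite /psi PP0 mul1r ss0; case: N {le} => //.
Qed.


Lemma P1_le1 x : 0 <= x < 1 -> P1 x <= 1.
Proof.
move=> /andP[x0 x1]; rewrite /P1.
have Ha : 0 < 1 - x <= 1 by rewrite subr_gt0 x1 /= lerBlDr lerDl.
have Hr : 0 <= r - 1 by rewrite subr_ge0 ltW.
by have := (@ger_powR R (1 - x) Ha 0 (r - 1) Hr); rewrite powRr0.
Qed.

Lemma chi_q N : 1 <= chi N q.
Proof.
have hq : q < 1 := q1.
have le : chi N 0 <= chi N q.
  apply: (@ger0_derive1_le_cc _ (chi N) 0 q).
  - move=> x; rewrite in_itv /= => /andP[_ xq].
    exact: der_ex _ _ _ (der_chi N x (lt_trans xq hq)).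
  - move=> x; rewrite in_itv /= => /andP[x0 xq].
    rewrite (der1_val _ _ _ (der_chi N x (lt_trans xq hq))).
    apply: mulr_ge0; first by rewrite subr_ge0 P1_le1 // ltW //= (lt_trans xq hq).
    apply: mulr_ge0; last by apply: exprn_ge0; exact: ltW.
    by apply: mulr_ge0 => //; exact/ltW/aa_gt0.
  - apply: derivable_within_continuous => x; rewrite in_itv /= => /andP[_ xq].
    exact: der_ex _ _ _ (der_chi N x (le_lt_trans xq hq)).
  - by rewrite in_itv /= lexx ltW // q0.
  - by rewrite in_itv /= lexx ltW // q0.
  - exact/ltW/q0.
apply: le_trans le; rewrite /chi /psi PP0 mul1r ss0; case: N => [|N].
  by rewrite expr0 mulr1 aa0 add0r.
by rewrite expr0n mulr0 addr0.
Qed.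

Lemma series_piE N : series (nb_pmf r p) N = psi N q.
Proof.
rewrite /series /= /psi /PP ssE opprB addrC subrK big_mkord mulr_sumr.
by apply: eq_bigr => j _; rewrite piE; ring.
Qed.

Lemma series_pi_bounds N : 1 - aa N * q ^+ N <= series pi N <= 1.
Proof.
rewrite series_piE psi_q andbT.
by have := chi_q N; rewrite /chi lerBlDr.
Qed.

Lemma aaq_cvg0 : (fun N => aa N * q ^+ N) @ \oo --> (0:R).
Proof.
have h := cvg_series_cvg_0 cvg_pi.
have -> : (fun N => aa N * q ^+ N) = (fun N => (powR p r)^-1 * pi N).
  apply/funext => N; rewrite piE.
  have h0 : powR p r != 0 by rewrite gt_eqF // powR_gt0.
  by field.
rewrite -(mulr0 (powR p r)^-1); exact: cvgMr h.
Qed.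

Lemma series_pi_cvg1 : series pi @ \oo --> (1:R).
Proof.
apply: (squeeze_cvgr (f := fun N => 1 - aa N * q ^+ N) (h := fun=> 1)).
  by near=> N; exact: series_pi_bounds.
  rewrite -[X in _ --> X]subr0; apply: cvgB; first exact: cvg_cst.
  exact: aaq_cvg0.
exact: cvg_cst.
Unshelve. all: by end_near.
Qed.

Lemma lim_pi : limn (series pi) = 1.
Proof. exact: cvg_lim series_pi_cvg1. Qed.

Lemma cvg_piE : series pi @ \oo --> limn (series pi).
Proof. exact: cvg_pi. Qed.

Definition mu : R := limn (series (fun j => j%:R * pi j)).

Lemma muE : p * mu = q * r.
Proof.
set u := fun j => j%:R * pi j.
have cu : series u @ \oo --> mu by exact: cvg_jpi.
have e : forall N, series u N.+1 = q * r * series pi N + q * series u N.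
  move=> N; rewrite /series /= big_nat_recl // /u mul0r add0r.
  rewrite !mulr_sumr -big_split /=; apply: eq_bigr => j _.
  by rewrite pi_rec; ring.
have c1 : (fun N => series u N.+1) @ \oo --> mu.
  by rewrite (cvg_shiftS (series u)).
have c2 : (fun N => series u N.+1) @ \oo --> q * r * 1 + q * mu.
  have -> : (fun N => series u N.+1) = (fun N => q * r * series pi N + q * series u N).
    by apply/funext => N; rewrite e.
  apply: cvgD; apply: cvgMr; [exact: series_pi_cvg1 | exact: cu].
have E : mu = q * r * 1 + q * mu.
  have L1 := cvg_lim _ c1; have L2 := cvg_lim _ c2.
  by rewrite -{1}L1 // L2.
transitivity (mu - (1 - p) * mu); first by ring.
by rewrite {1}E; ring.
Qed.

Definition H1 (k : nat) : R := \sum_(j < k) pi j.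
Definition Hh (h : nat -> R) (k : nat) : R := \sum_(j < k) pi j * h j.

Lemma H1_ge0 k : 0 <= H1 k.
Proof. by apply: sumr_ge0 => j _; exact: pi_ge0. Qed.

Lemma H1_le1 k : H1 k <= 1.
Proof.
have := series_pi_bounds k; rewrite /series /= big_mkord => /andP[_ ->] //.
Qed.

Lemma cheb (h : nat -> R) k : (forall i j, (i <= j)%N -> h i <= h j) ->
  cvgn (series (fun j => pi j * h j)) ->
  Hh h k + h k * (1 - H1 k) <= limn (series (fun j => pi j * h j)).
Proof.
move=> hmon hc.
set u := fun j => pi j * h j - h k * pi j.
have cu : series u @ \oo --> limn (series (fun j => pi j * h j)) - h k * 1.
  have -> : series u = (fun N => series (fun j => pi j * h j) N - h k * series pi N).
    apply/funext => N; rewrite /series /= /u sumrB; congr (_ - _).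
    by rewrite mulr_sumr.
  apply: cvgB; first exact: hc.
  by apply: cvgMr; exact: series_pi_cvg1.
have le : series u k <= limn (series u).
  apply: limr_ge; first by apply/cvg_ex; eexists; exact: cu.
  near=> N.
  have hN : (k <= N)%N by near: N; exists k.
  rewrite -subr_ge0 sub_series_geq // big_nat_cond; apply: sumr_ge0 => j /andP[/andP[kj _] _].
  rewrite /u [h k * _]mulrC -mulrBr mulr_ge0 ?pi_ge0 // subr_ge0; exact: hmon.
rewrite (cvg_lim _ cu) // in le.
have E : series u k = Hh h k - h k * H1 k.
  by rewrite /series /= /u sumrB !big_mkord /Hh /H1 mulr_sumr.
move: le; rewrite E mulr1; lra.
Unshelve. all: by end_near.
Qed.

Lemma fin_ident k : q * r * H1 k - p * Hh (fun j => j%:R) k = k%:R * pi k.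
Proof.
elim: k => [|k IH]; first by rewrite /H1 /Hh !big_ord0 mul0r; ring.
rewrite /H1 /Hh !big_ord_recr /= -/(H1 k) -/(Hh _ k) pi_rec.
transitivity ((q * r * H1 k - p * Hh (fun j : nat => j%:R) k) + q * r * pi k - p * (pi k * k%:R)); first by ring.
rewrite IH; ring.
Qed.

Variable z : R.
Hypothesis z0 : 0 <= z.

Definition ff (j : nat) : R := posp (j%:R - z).
Definition cc : R := nb_posp_mean r p z.

Lemma pospE (x : R) : posp x = if x < 0 then 0 else x.
Proof. rewrite /posp. case: ltP => //. Qed.

Lemma ff_ge0 j : 0 <= ff j.
Proof. by rewrite /ff pospE; case: ltP. Qed.

Lemma ff_le j : ff j <= j%:R.
Proof. have := z0; rewrite /ff pospE; case: ltP => _ ?; [exact: ler0n | lra]. Qed.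

Lemma ff_mon i j : (i <= j)%N -> ff i <= ff j.
Proof.
move=> ij; have hij : i%:R <= j%:R :> R by rewrite ler_nat.
rewrite /ff !pospE; case: ltP => hi; case: ltP => hj; lra.
Qed.

Lemma psi_mon i j : (i <= j)%N -> i%:R - ff i <= j%:R - ff j.
Proof.
move=> ij; have hij : i%:R <= j%:R :> R by rewrite ler_nat.
rewrite /ff !pospE; case: ltP => hi; case: ltP => hj; lra.
Qed.

Lemma cvg_pff : cvgn (series (fun j => pi j * ff j)).
Proof.
apply: (@series_le_cvg _ _ (fun j => j%:R * pi j)).
- by move=> j; rewrite mulr_ge0 ?pi_ge0 ?ff_ge0.
- by move=> j; rewrite mulr_ge0 ?pi_ge0.
- by move=> j; rewrite mulrC ler_wpM2r ?pi_ge0 ?ff_le.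
- exact: cvg_jpi.
Qed.

Lemma ccE : cc = limn (series (fun j => pi j * ff j)).
Proof. by []. Qed.

Lemma cvg_ppsi : cvgn (series (fun j => pi j * (j%:R - ff j))).
Proof.
have -> : (fun j => pi j * (j%:R - ff j)) = (fun j => j%:R * pi j) - (fun j => pi j * ff j).
  by apply/funext => j /=; rewrite mulrBr mulrC.
by apply: is_cvg_seriesB; [exact: cvg_jpi | exact: cvg_pff].
Qed.

Lemma lim_ppsi : limn (series (fun j => pi j * (j%:R - ff j))) = mu - cc.
Proof.
have -> : (fun j => pi j * (j%:R - ff j)) = (fun j => j%:R * pi j) - (fun j => pi j * ff j).
  by apply/funext => j /=; rewrite mulrBr mulrC.
by rewrite lim_seriesB //; [exact: cvg_jpi | exact: cvg_pff].
Qed.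

Definition uu (j : nat) : R := pi j * (ff j - cc).

Lemma S_cvg0 : series uu @ \oo --> (0:R).
Proof.
have -> : series uu = (fun N => series (fun j => pi j * ff j) N - cc * series pi N).
  apply/funext => N; rewrite /series /= /uu mulr_sumr -sumrB.
  by apply: eq_bigr => j _; rewrite mulrBr [cc * _]mulrC.
rewrite -(subrr cc); rewrite -[X in _ - X]mulr1.
by apply: cvgB; [exact: cvg_pff | apply: cvgMr; exact: series_pi_cvg1].
Qed.

Definition tt (K m : nat) : R := pi (K + m) * (ff (K + m) - cc).

Lemma tail_cvg K : series (tt K) @ \oo --> cc * H1 K - Hh ff K.
Proof.
have -> : series (tt K) = (fun N => series uu (N + K) - series uu K).
  apply/funext => N; rewrite sub_series_geq ?leq_addl // -{2}[K]add0n big_addn addnK.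
  by rewrite /series /=; apply: eq_bigr => i _; rewrite /tt /uu addnC.
have -> : cc * H1 K - Hh ff K = 0 - series uu K.
  rewrite /series /= /uu big_mkord /Hh /H1 mulr_sumr -sumrB.
  rewrite sub0r -sumrN; apply: eq_bigr => j _; ring.
apply: cvgB; last exact: cvg_cst.
by rewrite (cvg_shiftn K (series uu)); exact: S_cvg0.
Qed.

Lemma Hf_le K : Hh ff K <= ff K * H1 K.
Proof.
rewrite /Hh /H1 mulr_sumr; apply: ler_sum => j _.
by rewrite mulrC ler_wpM2r ?pi_ge0 // ff_mon // ltnW.
Qed.

Lemma Hpsi_le K : Hh (fun j => j%:R - ff j) K <= (K%:R - ff K) * H1 K.
Proof.
rewrite /Hh /H1 mulr_sumr; apply: ler_sum => j _.
rewrite mulrC ler_wpM2r ?pi_ge0 //.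
by apply: psi_mon; exact: ltnW.
Qed.

Lemma T_ge0 K : 0 <= cc * H1 K - Hh ff K.
Proof.
have ch := cheb ff K ff_mon cvg_pff; rewrite -ccE in ch.
have h1 := H1_ge0 K; have h2 := H1_le1 K; have hf := Hf_le K.
set a := cc - (Hh ff K + ff K * (1 - H1 K)).
set b := ff K * H1 K - Hh ff K.
have -> : cc * H1 K - Hh ff K = a * H1 K + (1 - H1 K) * b by rewrite /a /b; ring.
apply: addr_ge0; apply: mulr_ge0; rewrite /a /b; lra.
Qed.

Lemma T_le K : cc * H1 K - Hh ff K <= K%:R * pi K / p.
Proof.
have ch := cheb (fun j => j%:R - ff j) K psi_mon cvg_ppsi; rewrite lim_ppsi in ch.
have h1 := H1_ge0 K; have h2 := H1_le1 K; have hf := Hpsi_le K.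
have eH : Hh (fun j => j%:R - ff j) K = Hh (fun j => j%:R) K - Hh ff K.
  by rewrite /Hh -sumrB; apply: eq_bigr => j _; rewrite mulrBr.
rewrite eH in ch hf.
have fi := fin_ident K; have me := muE.
have e : K%:R * pi K / p = mu * H1 K - Hh (fun j => j%:R) K.
  rewrite -fi -me; field; by rewrite gt_eqF.
rewrite e.
set a := mu - cc - (Hh (fun j => j%:R) K - Hh ff K + (K%:R - ff K) * (1 - H1 K)).
set b := (K%:R - ff K) * H1 K - (Hh (fun j => j%:R) K - Hh ff K).
rewrite -subr_ge0.
have -> : mu * H1 K - Hh (fun j => j%:R) K - (cc * H1 K - Hh ff K) = a * H1 K + (1 - H1 K) * b
  by rewrite /a /b; ring.
apply: addr_ge0; apply: mulr_ge0; rewrite /a /b; lra.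
Qed.

Lemma term_eq k m : rising r (k.+1 + m) / rising r k.+1 * ((k`!)%:R / ((k.+1 + m)`!)%:R)
   * q ^+ m * (ff (k.+1 + m) - cc) = (k.+1%:R * pi k.+1)^-1 * tt k.+1 m.
Proof.
rewrite /tt !piE /aa exprD factS natrM.
have h1 : rising r k.+1 != 0 by rewrite gt_eqF // rising_gt0.
have h2 : powR p r != 0 by rewrite gt_eqF // powR_gt0.
have h3 : q ^+ k.+1 != 0 by rewrite expf_neq0 // gt_eqF // q0.
have h4 : (k`!)%:R != 0 :> R by rewrite pnatr_eq0 -lt0n fact_gt0.
have h5 : ((k.+1 + m)`!)%:R != 0 :> R by rewrite pnatr_eq0 -lt0n fact_gt0.
have h6 : (k.+1)%:R != 0 :> R by rewrite pnatr_eq0.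
field.
rewrite h1 h2 h3 h4 h5 /= andbT; rewrite -natr1 addrC in h6; exact: h6.
Qed.

Lemma gz_repr k : gz r p z k.+1 =
  - ((k.+1%:R * pi k.+1)^-1 * (cc * H1 k.+1 - Hh ff k.+1)).
Proof.
rewrite /gz /rseries; congr (- _).
have -> : (fun m => rising r (k.+1 + m) / rising r k.+1 * ((k.+1.-1)`!%:R / ((k.+1 + m)`!)%:R)
   * (1 - p) ^+ m * (posp ((k.+1 + m)%:R - z) - nb_posp_mean r p z)) =
   (fun m => (k.+1%:R * pi k.+1)^-1 * tt k.+1 m).
  by apply/funext => m; rewrite -term_eq.
apply: cvg_lim => //.
have -> : series (fun m => (k.+1%:R * pi k.+1)^-1 * tt k.+1 m) =
  (fun N => (k.+1%:R * pi k.+1)^-1 * series (tt k.+1) N).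
  by apply/funext => N; rewrite /series /= mulr_sumr.
apply: cvgMr; exact: tail_cvg.
Qed.

Lemma gz_bounds k : - p^-1 <= gz r p z k.+1 <= 0.
Proof.
rewrite gz_repr oppr_le0 lerNl opprK.
have hK : 0 < k.+1%:R * pi k.+1 by rewrite mulr_gt0 // ?ltr0n // pi_gt0.
apply/andP; split.
  rewrite ler_pdivrMl //; apply: (le_trans (T_le k.+1)).
  by rewrite mulrC.
by apply: mulr_ge0; [rewrite invr_ge0 ltW | exact: T_ge0].
Qed.

Lemma dgz_bound k : `| gz r p z k.+2 - gz r p z k.+1 | <= p^-1.
Proof.
have := gz_bounds k.+1; have := gz_bounds k.
move=> /andP[a b] /andP[c d]; rewrite ler_norml; apply/andP; split; lra.
Qed.
End NB.

Theorem mainTheorem5 (R : realType) (n : nat) (pv : 'I_n -> R) (r p : R) :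
  (forall i, 0 <= pv i <= 1) ->
  1 < r -> 0 < p < 1 ->
  r * (1 - p) = p * \sum_(i < n) pv i ->
  forall z : R, 0 <= z ->
    `| bern_sum_expect pv (stein r p (gz r p z)) |
      <= (2 * powR p (- (r + 1)) - p^-1) * \sum_(i < n) pv i * (1 - p * (1 - pv i)).
Proof.
move=> hpv r1 /andP[p0 p1] hr z z0.
rewrite bern_EE EE_stein //.
have hB : p^-1 <= 2 * powR p (- (r + 1)) - p^-1.
  have h : p^-1 <= powR p (- (r + 1)).
    rewrite powRN lef_pV2 ?posrE ?powR_gt0 //.
    apply: ge1r_powR; first by rewrite p0 ltW.
    by rewrite lerDr ltW // (lt_trans _ r1).
  lra.
have hc i : 0 <= pv i * (1 - p * (1 - pv i)).
  have /andP[a b] := hpv i; apply: mulr_ge0 => //.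
  rewrite subr_ge0; apply: (@le_trans _ _ (p * 1)); last by rewrite mulr1 ltW.
  by apply: ler_wpM2l; [exact: ltW | rewrite lerBlDr lerDl].
have hE i : `| EE R n pv (fun x => gz r p z (Vi n i x).+2 - gz r p z (Vi n i x).+1) | <= p^-1.
  rewrite /EE; apply: (le_trans (ler_norm_sum _ _ _)).
  apply: (@le_trans _ _ (\sum_x wt R n pv x * p^-1)).
    apply: ler_sum => x _; rewrite normrM ger0_norm ?wt_ge0 //.
    by rewrite ler_wpM2l ?wt_ge0 // dgz_bound.
  by rewrite -mulr_suml; have := EE_mass R n pv; rewrite /EE => e; under eq_bigr do rewrite -[wt _ _ _ _]mulr1; rewrite e mul1r.
apply: (le_trans (ler_norm_sum _ _ _)).
rewrite mulr_sumr; apply: ler_sum => i _.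
rewrite normrM ger0_norm // mulrC ler_wpM2r //.
exact: le_trans (hE i) hB.
Qed.
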